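(* Let PS1 and PS2 be two pure strategies (as in the context) with $m_{PS1}(X)$ finite for every $X\in\mathcal{S}$. Then PS2 is complementary to PS1 (i.e. there exists $X\in\mathcal{S}_{\mathrm{non}}$ with $\Delta_{PS1}(X)<\Delta_{PS2}(X)$) if and only if there exists a mixed strategy MS derived from PS1 and PS2 whose average expected hitting time is strictly less than that of PS1, i.e. $\bar m_{MS}<\bar m_{PS1}$, where $\bar m=\frac{1}{|\mathcal{S}|}\sum_{X\in\mathcal{S}}m(X)$.
   Context: A fitness function $f$ on a finite set is to be maximised. A metaheuristic generates populations $\Phi_0,\Phi_1,\dots$. Let $\mathcal{S}$ be the finite set of all populations, $\mathcal{S}_{\mathrm{opt}}$ those containing at least one optimal solution, $\mathcal{S}_{\mathrm{non}}=\mathcal{S}\setminus\mathcal{S}_{\mathrm{opt}}$. The sequence is a time-homogeneous Markov chain on $\mathcal{S}$ with transition probabilities $P(X,Y)=\Pr(\Phi_{t+1}=Y\mid\Phi_t=X)$, every state of $\mathcal{S}_{\mathrm{opt}}$ absorbing. The expected hitting time $m(X)\in[0,\infty]$ is the expected number of generations until first entering $\mathcal{S}_{\mathrm{opt}}$ from $\Phi_0=X$ ($m(X)=0$ on $\mathcal{S}_{\mathrm{opt}}$). A pure strategy is such a time-independent transition matrix. PS1, PS2 are pure strategies with transition matrices $P_1,P_2$ on the same $\mathcal{S}$ (with $\mathcal{S}_{\mathrm{opt}}$ absorbing), expected hitting times $m_{PS1},m_{PS2}$. A mixed strategy MS derived from PS1 and PS2 assigns to each $X\in\mathcal{S}$ probabilities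 $P_X(PS1)\in[0,1]$, $P_X(PS2)=1-P_X(PS1)$, and has transition matrix $P_{MS}(X,Y)=P_X(PS1)P_1(X,Y)+P_X(PS2)P_2(X,Y)$, with expected hitting time $m_{MS}$. With $d(X)=m_{PS1}(X)$, for $X\in\mathcal{S}_{\mathrm{non}}$: $\Delta_{PS1}(X)=d(X)-\sum_{Y\in\mathcal{S}_{\mathrm{non}}}P_1(X,Y)d(Y)$, $\Delta_{PS2}(X)=d(X)-\sum_{Y\in\mathcal{S}_{\mathrm{non}}}P_2(X,Y)d(Y)$. *)

(* Defs.v *)
From HB Require Import structures.
From mathcomp Require Import all_boot all_order all_algebra.
From mathcomp Require Import all_classical all_reals all_analysis.

Set Implicit Arguments.
Unset Strict Implicit.
Unset Printing Implicit Defensive.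

Import Order.TTheory GRing.Theory Num.Theory.
Local Open Scope ring_scope.

Definition stochastic (R : realType) (S : finType) (P : S -> S -> R) : Prop :=
  (forall X Y, 0 <= P X Y) /\ (forall X, \sum_(Y : S) P X Y = 1).

Definition pure_strategy (R : realType) (S : finType) (opt : {set S})
    (P : S -> S -> R) : Prop :=
  stochastic P /\ (forall X, X \in opt -> P X X = 1).

(* surv P opt t X = Pr(Phi_0, ..., Phi_t are all in S_non | Phi_0 = X)
                  = Pr(T > t | Phi_0 = X), T the first hitting time of S_opt. *)
Fixpoint surv (R : realType) (S : finType) (opt : {set S})
    (P : S -> S -> R) (t : nat) (X : S) : R :=
  match t with
  | 0 => if X \in opt then 0 else 1
  | t'.+1 => if X \in opt then 0
             else \sum_(Y : S | Y \notin opt) P X Y * surv opt P t' Y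
  end.

(* Expected hitting time m(X) = E[T | Phi_0 = X] in [0, +oo], computed by the
   tail-sum formula E[T] = \sum_{t >= 0} Pr(T > t). It is 0 on S_opt. *)
Definition hitting_time (R : realType) (S : finType) (opt : {set S})
    (P : S -> S -> R) (X : S) : \bar R :=
  (\sum_(0 <= t <oo) (surv opt P t X)%:E)%E.

Definition avg_hitting_time (R : realType) (S : finType) (opt : {set S})
    (P : S -> S -> R) : \bar R :=
  (((#|S|%:R)^-1)%:E * \sum_(X : S) hitting_time opt P X)%E.

(* Transition matrix of the mixed strategy with P_X(PS1) = q X. *)
Definition mixed_matrix (R : realType) (S : finType)
    (q : S -> R) (P1 P2 : S -> S -> R) : S -> S -> R :=
  fun X Y => q X * P1 X Y + (1 - q X) * P2 X Y.

(* Delta_PS(X) = d(X) - \sum_{Y in S_non} P(X,Y) d(Y), with d = m_PS1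
   (assumed finite, so taken as a real number via [fine]). *)
Definition Delta (R : realType) (S : finType) (opt : {set S})
    (P1 P : S -> S -> R) (X : S) : R :=
  let d := fun Z => fine (hitting_time opt P1 Z) in
  d X - \sum_(Y : S | Y \notin opt) P X Y * d Y.

Definition complementary (R : realType) (S : finType) (opt : {set S})
    (P1 P2 : S -> S -> R) : Prop :=
  exists X, X \notin opt /\ Delta opt P1 P1 X < Delta opt P1 P2 X.

(* Main.v *)
Require Import Defs.
From HB Require Import structures.
From mathcomp Require Import all_boot all_order all_algebra.
From mathcomp Require Import all_classical all_reals all_analysis.
From mathcomp Require Import lra.
Import Order.TTheory GRing.Theory Num.Theory.
Local Open Scope ring_scope.
Local Open Scope classical_set_scope.
Import numFieldNormedType.Exports.

Set Implicit Arguments.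
Section Aux.
Variables (R : realType) (S : finType) (opt : {set S}).

Implicit Types (P M : S -> S -> R).
Definition psum P n X := \sum_(0 <= t < n) surv opt P t X.

Lemma surv_opt P t X : X \in opt -> surv opt P t X = 0.
Proof. by case: t => [|t] /= ->. Qed.

Lemma surv_ge0 P : (forall X Y, 0 <= P X Y) -> forall t X, 0 <= surv opt P t X.
Proof.
move=> P0; elim=> [|t IH] X /=; first by case: ifP.
case: ifP => // _; apply: sumr_ge0 => Y _; exact: mulr_ge0.
Qed.

Lemma psum_ge0 P : (forall X Y, 0 <= P X Y) -> forall n X, 0 <= psum P n X.
Proof. move=> P0 n X; apply: sumr_ge0 => t _; exact: surv_ge0. Qed.

Lemma psum_opt P n X : X \in opt -> psum P n X = 0.
Proof. by move=> Xo; apply: big1 => t _; rewrite surv_opt. Qed.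

Lemma survS P t X : X \notin opt ->
  surv opt P t.+1 X = \sum_(Y | Y \notin opt) P X Y * surv opt P t Y.
Proof. by move=> /negbTE /= ->. Qed.

Lemma psum_rec P n X : X \notin opt ->
  psum P n.+1 X = 1 + \sum_(Y | Y \notin opt) P X Y * psum P n Y.
Proof.
move=> Xn; rewrite /psum big_nat_recl //= (negbTE Xn); congr (_ + _).
idtac.

rewrite exchange_big /=; apply: eq_bigr => Y _; rewrite mulr_sumr.
by [].
Qed.

Lemma ht_ge P : (forall X Y, 0 <= P X Y) -> forall n X,
  ((psum P n X)%:E <= hitting_time opt P X)%E.
Proof.
move=> P0 n X; rewrite /psum -sumEFin /hitting_time.
apply: nneseries_lim_ge => k _ _; rewrite lee_fin; exact: surv_ge0.
Qed.

Lemma ht_le P : (forall X Y, 0 <= P X Y) -> forall X c,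
  (forall n, psum P n X <= c) -> (hitting_time opt P X <= c%:E)%E.
Proof.
move=> P0 X c Hc; rewrite /hitting_time; apply: lime_le.
  by apply: is_cvg_nneseries => k _ _; rewrite lee_fin; exact: surv_ge0.
by apply: nearW => n; rewrite sumEFin lee_fin; exact: Hc.
Qed.

Lemma ht_cvg P : (forall X Y, 0 <= P X Y) -> forall X,
  hitting_time opt P X \is a fin_num ->
  psum P n X @[n --> \oo] --> fine (hitting_time opt P X).
Proof.
move=> P0 X hf.
have cv : (fun n => (\sum_(0 <= t < n) (surv opt P t X)%:E)%E) @ \oo -->
    hitting_time opt P X.
  by apply: is_cvg_nneseries => k _ _; rewrite lee_fin; exact: surv_ge0.
move: cv; rewrite -(fineK hf) => /fine_cvgP [_].
by apply: cvg_trans; apply: near_eq_cvg; apply: nearW => n /=; rewrite sumEFin.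
Qed.


Lemma cvg_sumP P X (f : nat -> S -> R) (l : S -> R) :
  (forall Y, f n Y @[n --> \oo] --> l Y) ->
  \sum_(Y | Y \notin opt) P X Y * f n Y @[n --> \oo] -->
  \sum_(Y | Y \notin opt) P X Y * l Y.
Proof.
move=> H; apply: cvg_big => //; first exact: add_continuous.
move=> Y _; apply: cvgMl_tmp; exact: H.
Qed.

Lemma d_eq P : (forall X Y, 0 <= P X Y) ->
  (forall X, hitting_time opt P X \is a fin_num) -> forall X, X \notin opt ->
  fine (hitting_time opt P X) =
  1 + \sum_(Y | Y \notin opt) P X Y * fine (hitting_time opt P Y).
Proof.
move=> P0 hf X Xn.
have h1 := ht_cvg P P0 X (hf X); rewrite -cvg_shiftS /= in h1.
have h2 : 1 + \sum_(Y | Y \notin opt) P X Y * psum P n Y @[n --> \oo] -->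
   1 + \sum_(Y | Y \notin opt) P X Y * fine (hitting_time opt P Y).
  apply: cvgD; first exact: cvg_cst.
  by apply: (@cvg_sumP P X (fun n Y => psum P n Y)) => Y; exact: (ht_cvg P P0 Y (hf Y)).
have h3 : psum P n.+1 X @[n --> \oo] -->
   1 + \sum_(Y | Y \notin opt) P X Y * fine (hitting_time opt P Y).
  apply: cvg_trans h2.
  by apply: near_eq_cvg; apply: nearW => n /=; rewrite psum_rec.
exact: (cvg_unique _ h1 h3).
Qed.


Lemma upper M (d e : S -> R) : (forall X Y, 0 <= M X Y) -> (forall X, 0 <= e X) ->
  (forall X, 0 <= d X) ->
  (forall X, X \notin opt ->
     1 + \sum_(Y | Y \notin opt) M X Y * d Y + e X <= d X) ->
  forall X, X \notin opt -> (hitting_time opt M X <= (d X - e X)%:E)%E.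
Proof.
move=> M0 e0 d0 H.
have key : forall n X, X \notin opt -> psum M n X <= d X - e X.
  elim=> [|n IH] X Xn.
    rewrite /psum big_geq // subr_ge0; apply: le_trans (H X Xn); rewrite lerDr.
    by apply: addr_ge0 => //; apply: sumr_ge0 => Y _; exact: mulr_ge0.
  rewrite psum_rec //.
  apply: (@le_trans _ _ (1 + \sum_(Y | Y \notin opt) M X Y * d Y)).
    rewrite lerD2l; apply: ler_sum => Y Yn; apply: ler_wpM2l => //.
    by apply: le_trans (IH Y Yn) _; rewrite lerBlDr lerDl.
  by rewrite lerBrDr; exact: H.
move=> X Xn; apply: ht_le => // n; exact: key.
Qed.

Lemma lower M (d : S -> R) : (forall X Y, 0 <= M X Y) ->
  (forall X, 0 <= d X) ->
  (forall X, X \notin opt -> d X <= 1 + \sum_(Y | Y \notin opt) M X Y * d Y) ->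
  forall X, X \notin opt -> ((d X)%:E <= hitting_time opt M X)%E.
Proof.
move=> M0 d0 H.
set C := \sum_Y d Y.
have dC : forall Y, d Y <= C.
  by move=> Y; rewrite /C (bigD1 Y) //= lerDl; apply: sumr_ge0.
have key : forall n X, X \notin opt -> d X <= psum M n X + C * surv opt M n X.
  elim=> [|n IH] X Xn.
    by rewrite /psum big_geq // add0r /= (negbTE Xn) mulr1; exact: dC.
  apply: le_trans (H X Xn) _.
  rewrite psum_rec // survS // -addrA lerD2l mulr_sumr -big_split /=.
  apply: ler_sum => Y Yn; rewrite mulrCA -mulrDr; apply: ler_wpM2l => //.
  exact: IH.
move=> X Xn.
have hge : (0 <= hitting_time opt M X)%E.
  by have := ht_ge M M0 0 X; by rewrite /psum big_geq.
case E : (hitting_time opt M X) => [r| |]; last 2 first.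
- exact: leey.
- by move: hge; rewrite E.
have cv := ht_cvg M M0 X; rewrite E /= in cv; have {}cv := cv isT.
have cvs : surv opt M n X @[n --> \oo] --> 0.
  have cv1 : psum M n.+1 X @[n --> \oo] --> r.
    by rewrite (cvg_shiftS (fun n => psum M n X)).
  have h : psum M n.+1 X - psum M n X @[n --> \oo] --> 0.
    by rewrite -(subrr r); apply: cvgB.
  apply: cvg_trans h; apply: near_eq_cvg; apply: nearW => n /=.
  by rewrite /psum big_nat_recr //= addrAC subrr add0r.
have cv2 : psum M n X + C * surv opt M n X @[n --> \oo] --> r.
  rewrite -[r]addr0 -(mulr0 C); apply: cvgD => //; exact: cvgMl_tmp.
rewrite lee_fin -(cvg_lim _ cv2) //; apply: limr_ge; first exact: cvgP cv2.
by apply: nearW => n; exact: key.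
Qed.

End Aux.
Arguments ht_ge {R S} opt {P}.
Arguments ht_le {R S} opt {P}.
Arguments d_eq {R S} opt {P}.
Arguments upper {R S} opt {M d e}.
Arguments lower {R S} opt {M d}.

Lemma ht_opt (R : realType) (S : finType) (opt : {set S}) (P : S -> S -> R) X :
  (forall X Y, 0 <= P X Y) -> X \in opt -> hitting_time opt P X = 0%E.
Proof.
move=> P0 Xo; apply/eqP; rewrite eq_le; apply/andP; split.
  by apply: ht_le => // n; rewrite psum_opt.
by have := ht_ge opt P0 0 X; rewrite /psum big_geq.
Qed.

Lemma mixed_ge0 (R : realType) (S : finType) (q : S -> R) (P1 P2 : S -> S -> R) :
  (forall X, 0 <= q X <= 1) -> (forall X Y, 0 <= P1 X Y) -> (forall X Y, 0 <= P2 X Y) ->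
  forall X Y, 0 <= mixed_matrix q P1 P2 X Y.
Proof.
move=> q01 h1 h2 X Y; rewrite /mixed_matrix; have /andP[qa qb] := q01 X.
by apply: addr_ge0; apply: mulr_ge0 => //; rewrite subr_ge0.
Qed.

Theorem corollary6 (R : realType) (S : finType) (opt : {set S})
    (P1 P2 : S -> S -> R) :
  pure_strategy opt P1 -> pure_strategy opt P2 ->
  (forall X : S, hitting_time opt P1 X \is a fin_num) ->
  complementary opt P1 P2 <->
  (exists q : S -> R, (forall X, 0 <= q X <= 1) /\
     (avg_hitting_time opt (mixed_matrix q P1 P2) < avg_hitting_time opt P1)%E).
Proof.
move=> [[h1 _] _] [[h2 _] _] hf.
set d := fun Z => fine (hitting_time opt P1 Z).
have d0 : forall Z, 0 <= d Z.
  by move=> Z; apply: fine_ge0; have := ht_ge opt h1 0 Z; rewrite /psum big_geq.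
have deq : forall X, X \notin opt ->
    d X = 1 + \sum_(Y | Y \notin opt) P1 X Y * d Y.
  by move=> X Xn; exact: d_eq.
have DeltaE : forall P X, Delta opt P1 P X =
    d X - \sum_(Y | Y \notin opt) P X Y * d Y by [].
have D1 : forall X, X \notin opt -> Delta opt P1 P1 X = 1.
  by move=> X Xn; rewrite DeltaE {1}(deq X Xn) addrK.
have htE : forall X, hitting_time opt P1 X = (d X)%:E.
  by move=> X; rewrite /d fineK.
have dopt : forall X, X \in opt -> d X = 0.
  by move=> X Xo; rewrite /d ht_opt.
have sumM : forall q X, \sum_(Y | Y \notin opt) mixed_matrix q P1 P2 X Y * d Y =
   q X * (\sum_(Y | Y \notin opt) P1 X Y * d Y) +
   (1 - q X) * (\sum_(Y | Y \notin opt) P2 X Y * d Y).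
  move=> q X; rewrite !mulr_sumr -big_split /=; apply: eq_bigr => Y _.
  by rewrite /mixed_matrix mulrDl !mulrA.
have avgP1 : avg_hitting_time opt P1 = ((#|S|%:R)^-1 * \sum_X d X)%:E.
  by rewrite /avg_hitting_time; under eq_bigr do rewrite htE; rewrite sumEFin.
split.
- move=> [X0 [X0n hlt]].
  set q := fun X : S => if X == X0 then 0 else 1 : R.
  have q01 : forall X, 0 <= q X <= 1.
    by move=> X; rewrite /q; case: ifP => _; rewrite ?lexx ?ler01.
  exists q; split => //.
  set M := mixed_matrix q P1 P2.
  have M0 := @mixed_ge0 _ _ q P1 P2 q01 h1 h2.
  set del := Delta opt P1 P2 X0 - 1.
  have del0 : 0 < del.
    by move: hlt; rewrite D1 // /del subr_gt0.
  set e := fun X : S => if X == X0 then del else 0.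
  have e0 : forall X, 0 <= e X.
    by move=> X; rewrite /e; case: ifP => _ //; exact: ltW.
  have hM : forall X, X \notin opt ->
      1 + \sum_(Y | Y \notin opt) M X Y * d Y + e X <= d X.
    move=> X Xn; rewrite /M sumM /e /q; case: ifP => [/eqP ->|_].
      by rewrite /del DeltaE mul0r add0r subr0 mul1r; lra.
    by rewrite subrr mul0r addr0 mul1r addr0 -deq.
  have up := upper opt M0 e0 d0 hM.
  have card0 : (0 < #|S|)%N by apply/card_gt0P; exists X0.
  have c0 : 0 < (#|S|%:R)^-1 :> R by rewrite invr_gt0 ltr0n.
  have hsum : (\sum_X hitting_time opt M X <= (\sum_X (d X - e X))%:E)%E.
    rewrite -sumEFin; apply: lee_sum => X _.
    case: (boolP (X \in opt)) => Xo; last exact: up.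
    rewrite ht_opt // dopt // /e; case: ifP => [/eqP XX|_].
      by move: X0n; rewrite -XX Xo.
    by rewrite subr0.
  have esum : \sum_X e X = del.
    rewrite (bigD1 X0) //= big1 => [|X /negbTE XX]; last by rewrite /e XX.
    by rewrite /e eqxx addr0.
  rewrite avgP1 /avg_hitting_time.
  apply: (le_lt_trans (lee_wpmul2l _ hsum)); first by rewrite lee_fin ltW.
  rewrite -EFinM lte_fin; rewrite ltr_pM2l //.
  by rewrite sumrB esum ltrBlDr ltrDl.
- move=> [q [q01 hlt]].
  have [//|nc] := pselect (complementary opt P1 P2).
  exfalso.
  set M := mixed_matrix q P1 P2.
  have M0 := @mixed_ge0 _ _ q P1 P2 q01 h1 h2.
  have hM : forall X, X \notin opt ->
      d X <= 1 + \sum_(Y | Y \notin opt) M X Y * d Y.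
    move=> X Xn.
    have : ~~ (Delta opt P1 P1 X < Delta opt P1 P2 X).
      by apply/negP => h; apply: nc; exists X.
    rewrite -leNgt D1 // DeltaE /M sumM.
    have := deq X Xn; have /andP[qa qb] := q01 X.
    set A := \sum_(Y | Y \notin opt) P1 X Y * d Y.
    set B := \sum_(Y | Y \notin opt) P2 X Y * d Y.
    move=> dX hB.
    have hAB : A <= B by lra.
    have hh := @mulr_ge0 _ (1 - q X) (B - A); rewrite !subr_ge0 in hh; have := hh qb hAB.
    nra.
  have lo := lower opt M0 d0 hM.
  have hsum : ((\sum_X d X)%:E <= \sum_X hitting_time opt M X)%E.
    rewrite -sumEFin; apply: lee_sum => X _.
    case: (boolP (X \in opt)) => Xo; last exact: lo.
    rewrite dopt //; have := ht_ge opt M0 0 X; by rewrite /psum big_geq.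
  move: hlt; rewrite avgP1 /avg_hitting_time EFinM; apply/negP; rewrite -leNgt.
  apply: lee_wpmul2l => //; rewrite lee_fin invr_ge0; exact: ler0n.
Qed.
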